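(* Let $G$ be a finite group with an abelian normal subgroup $A$ such that $G/A$ is cyclic, and let $s$ be an automorphism of $G$ of order $2$ with $s(A)=A$. Suppose there is a subgroup $H\le G$ with $H\cap A=\{1\}$ and $G = s(H)H$. Then $A$ has a cyclic subgroup of index at most $2$.
   Context: $s(H)H$ denotes the set of products $ab$ with $a\in s(H)$, $b\in H$. *)

(* Defs.v *)
From mathcomp Require Import all_boot all_fingroup all_solvable.

(* Main.v *)
Require Import Defs.
From mathcomp Require Import all_boot all_fingroup all_solvable.
Set Implicit Arguments.
Unset Strict Implicit.
Unset Printing Implicit Defensive.
Import GroupScope.

Module Helpers.
Section Core.
Variables (gT : finGroupType) (Z : {group gT}) (u : gT).
Hypothesis cZ : abelian Z.
Definition rho_def (x : gT) := x ^ u^-1.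
Fact rho_key : unit. Proof. by []. Qed.
Definition rho := locked_with rho_key rho_def.
Lemma rhoEd x : rho x = x ^ u^-1. Proof. by rewrite [rho]unlock. Qed.
Definition U_def (x : gT) := rho x * x^-1.
Fact U_key : unit. Proof. by []. Qed.
Definition U := locked_with U_key U_def.
Lemma UEd x : U x = rho x * x^-1. Proof. by rewrite [U]unlock. Qed.
Definition rinv (X : {set gT}) := forall x, x \in X -> rho x \in X.
Hypothesis iZ : rinv Z.
Definition P_def (d : gT) (j : nat) := (d * u) ^+ j * u ^- j.
Fact P_key : unit. Proof. by []. Qed.
Definition P := locked_with P_key P_def.
Lemma PEd d j : P d j = (d * u) ^+ j * u ^- j. Proof. by rewrite [P]unlock. Qed.

Lemma cm x y : x \in Z -> y \in Z -> x * y = y * x.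
Proof. by move=> xZ yZ; apply: (centsP cZ). Qed.

Lemma rhoM x y : rho (x * y) = rho x * rho y. Proof. by rewrite !rhoEd conjMg. Qed.
Lemma rhoV x : rho x^-1 = (rho x)^-1. Proof. by rewrite !rhoEd conjVg. Qed.
Lemma rhoX x n : rho (x ^+ n) = (rho x) ^+ n. Proof. by rewrite !rhoEd conjXg. Qed.
Lemma rho1 : rho 1 = 1. Proof. by rewrite !rhoEd conj1g. Qed.

Lemma U_Z x : x \in Z -> U x \in Z.
Proof. by move=> xZ; rewrite UEd groupM ?groupV ?iZ. Qed.

Lemma UM x y : x \in Z -> y \in Z -> U (x * y) = U x * U y.
Proof.
move=> xZ yZ; have := cm (U_Z yZ) (groupVr xZ); rewrite !UEd => h.
by rewrite rhoM invMg !mulgA -(mulgA (rho x) (rho y) y^-1) -(mulgA (rho x) _ x^-1) h !mulgA.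
Qed.

Lemma U1 : U 1 = 1. Proof. by rewrite UEd rho1 invg1 mulg1. Qed.

Lemma UV x : x \in Z -> U x^-1 = (U x)^-1.
Proof.
move=> xZ; apply/eqP; rewrite eq_sym eq_invg_mul -UM ?groupV //.
by rewrite mulgV U1.
Qed.

Lemma UX x n : x \in Z -> U (x ^+ n) = (U x) ^+ n.
Proof.
move=> xZ; elim: n => [|n IH]; first by rewrite !expg0 U1.
by rewrite !expgS UM ?groupX // IH.
Qed.

Lemma Urho x : U (rho x) = rho (U x). Proof. by rewrite !UEd rhoM rhoV. Qed.
Lemma rhoE x : rho x = U x * x. Proof. by rewrite UEd mulgKV. Qed.

Lemma iter_rho i x : iter i rho x = x ^ (u ^- i).
Proof.
elim: i => [|i IH] /=; first by rewrite expg0 invg1 conjg1.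
by rewrite IH rhoEd -conjgM -invMg -expgS.
Qed.

Lemma iter_inv (X : {set gT}) i x : rinv X -> x \in X -> iter i rho x \in X.
Proof. by move=> iX xX; elim: i => //= i IH; apply: iX. Qed.

Lemma P0 d : P d 0 = 1. Proof. by rewrite PEd !expg0 invg1 mulg1. Qed.

Lemma PS d j : P d j.+1 = d * rho (P d j).
Proof.
rewrite !PEd rhoEd expgS [u ^+ j.+1]expgS invMg conjgE invgK !mulgA. reflexivity.
Qed.

Lemma PD d i j : P d (i + j) = P d i * iter i rho (P d j).
Proof.
by rewrite iter_rho !PEd conjgE invgK !expgD invMg !mulgA mulgKV.
Qed.

Lemma P_in (X : {set gT}) d j : group_set X -> rinv X -> d \in X -> P d j \in X.
Proof.
move=> gX iX dX; pose XG := Group gX.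
have: P d j \in XG; last by [].
elim: j => [|j IH]; first by rewrite P0 group1.
by rewrite PS groupM // iX.
Qed.

Definition Nper d := (#[d * u] * #[u])%N.

Lemma Pper d j k : P d (j + k * Nper d)%N = P d j.
Proof.
rewrite !PEd /Nper !expgD.
have -> : (d * u) ^+ (k * (#[d * u] * #[u])) = 1.
  by rewrite (mulnC k) -mulnA expgM expg_order expg1n.
have -> : u ^+ (k * (#[d * u] * #[u])) = 1.
  by rewrite mulnA (mulnC (k * _)%N) expgM expg_order expg1n.
by rewrite !mulg1.
Qed.


Definition UG (X : {set gT}) := <<[set U x | x in X]>>.
Canonical UG_group X := @Group _ (UG X) (group_set_generated _).
Definition PwG (X : {set gT}) (k : nat) := <<[set x ^+ k | x in X]>>.
Canonical PwG_group X k := @Group _ (PwG X k) (group_set_generated _).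

Section Grp.
Variables X Y : {group gT}.
Hypotheses (sXZ : X \subset Z) (sYZ : Y \subset Z).

Lemma inZ x : x \in X -> x \in Z. Proof. exact: (subsetP sXZ). Qed.

Lemma UG_id : UG X = [set U x | x in X].
Proof.
apply: gen_set_id; apply/group_setP; split.
  by apply/imsetP; exists 1; rewrite ?group1 ?U1.
move=> _ _ /imsetP[x xX ->] /imsetP[y yX ->]; apply/imsetP; exists (x * y).
  by rewrite groupM.
by rewrite UM // inZ.
Qed.

Lemma memUG y : y \in UG X -> exists2 x, x \in X & y = U x.
Proof. by rewrite UG_id => /imsetP. Qed.

Lemma mem_UG x : x \in X -> U x \in UG X.
Proof. by move=> xX; rewrite UG_id imset_f. Qed.

Lemma UG_sub : rinv X -> UG X \subset X.
Proof.
move=> iX; apply/subsetP=> _ /memUG[x xX ->].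
by rewrite UEd groupM ?groupV ?iX.
Qed.

Lemma UG_inv : rinv X -> rinv (UG X).
Proof.
by move=> iX _ /memUG[x xX ->]; rewrite -Urho mem_UG // iX.
Qed.

Lemma Pw_id k : PwG X k = [set x ^+ k | x in X].
Proof.
apply: gen_set_id; apply/group_setP; split.
  by apply/imsetP; exists 1; rewrite ?group1 ?expg1n.
move=> _ _ /imsetP[x xX ->] /imsetP[y yX ->]; apply/imsetP; exists (x * y).
  by rewrite groupM.
by rewrite expgMn //; apply: cm; apply: inZ.
Qed.

Lemma memPw k y : y \in PwG X k -> exists2 x, x \in X & y = x ^+ k.
Proof. by rewrite Pw_id => /imsetP. Qed.

Lemma mem_Pw k x : x \in X -> x ^+ k \in PwG X k.
Proof. by move=> xX; rewrite Pw_id; apply/imsetP; exists x. Qed.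

Lemma Pw_sub k : PwG X k \subset X.
Proof. by apply/subsetP=> _ /memPw[x xX ->]; rewrite groupX. Qed.

Lemma Pw_inv k : rinv X -> rinv (PwG X k).
Proof. by move=> iX _ /memPw[x xX ->]; rewrite rhoX mem_Pw // iX. Qed.

Lemma memJ z : z \in X <*> Y -> exists x y, [/\ x \in X, y \in Y & z = x * y].
Proof.
rewrite comm_joingE; last by apply: centC; apply: sub_abelian_cent2 cZ sXZ sYZ.
by case/mulsgP=> x y xX yY ->; exists x, y.
Qed.

Lemma mem_J x y : x \in X -> y \in Y -> x * y \in X <*> Y.
Proof.
move=> xX yY; rewrite groupM //.
  exact: (subsetP (joing_subl _ _)).
exact: (subsetP (joing_subr _ _)).
Qed.

Lemma J_Z : X <*> Y \subset Z. Proof. by rewrite join_subG sXZ sYZ. Qed.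

Lemma J_inv : rinv X -> rinv Y -> rinv (X <*> Y).
Proof.
move=> iX iY z /memJ[x [y [xX yY ->]]].
by rewrite rhoM mem_J ?iX ?iY.
Qed.
End Grp.

Lemma UG_Z (X : {group gT}) : X \subset Z -> rinv X -> UG X \subset Z.
Proof. by move=> sXZ iX; apply: subset_trans (UG_sub sXZ iX) sXZ. Qed.
Lemma Pw_Z (X : {group gT}) k : X \subset Z -> PwG X k \subset Z.
Proof. by move=> sXZ; apply: subset_trans (Pw_sub sXZ k) sXZ. Qed.

Definition cov (A : {set gT}) d := forall a, a \in A -> exists j, a = P d j.

Lemma P_inG (X : {group gT}) d j : rinv X -> d \in X -> P d j \in X.
Proof.
move=> iX dX; elim: j => [|j IH]; first by rewrite P0 group1.
by rewrite PS groupM // iX.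
Qed.

Lemma Nper_gt0 d : 0 < Nper d.
Proof. by rewrite /Nper muln_gt0 !order_gt0. Qed.

Lemma F (A K : {group gT}) d b :
  A \subset Z -> rinv A -> K \subset A -> rinv K -> d \in A -> cov A d ->
  b \in A -> d * U b \in K -> A \subset K.
Proof.
move=> sAZ iA sKA iK dA cA bA dbK.
have PA j : P d j \in A by apply: P_inG.
have inZA x : x \in A -> x \in Z by apply: (subsetP sAZ).
case: (cA b bA) => i Pi.
have step j : P d (i + j) * b^-1 \in K.
  elim: j => [|j IH]; first by rewrite addn0 -Pi mulgV group1.
  rewrite addnS PS.
  have XZ := inZA _ (PA (i + j)); have bZ := inZA _ bA; have dZ := inZA _ dA.
  set X := P d (i + j) in XZ IH *.
  have e : d * rho X * b^-1 = rho (X * b^-1) * (d * U b).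
    rewrite rhoM rhoV UEd !mulgA -(mulgA (rho X)) (cm (groupVr (iZ bZ)) dZ).
    by rewrite mulgA mulgKV (cm (iZ XZ) dZ).
  by rewrite e groupM // iK.
have key j : P d j * b^-1 \in K.
  have le : i <= j + i.+1 * Nper d.
    apply: leq_trans (leq_addl _ _); apply: leq_trans (leqnSn i) _.
    by rewrite -{1}(muln1 i.+1) leq_mul2l Nper_gt0.
  by have := step (j + i.+1 * Nper d - i); rewrite subnKC // Pper.
have bK : b \in K by have := key 0; rewrite P0 mul1g groupV.
apply/subsetP => a aA; case: (cA a aA) => j ->.
by rewrite -(mulgKV b (P d j)) groupM // key.
Qed.

Lemma FJ (A X : {group gT}) d :
  A \subset Z -> rinv A -> X \subset Z -> rinv X -> d \in A -> cov A d ->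
  d^-1 \in X <*> UG A -> A \subset X.
Proof.
move=> sAZ iA sXZ iX dA cA /(memJ sXZ (UG_Z sAZ iA))[k [y [kX yU e]]].
have [b bA ey] := memUG sAZ yU.
have yA : y \in A by apply: (subsetP (UG_sub sAZ iA)).
have kA : k \in A by rewrite -(mulgK y k) -e groupM ?groupV.
have dbK : d * U b \in A :&: X.
  have -> : d * U b = k^-1.
    rewrite -ey; have -> : k = d^-1 * y^-1 by rewrite e mulgK.
    by rewrite invMg !invgK; apply: cm; apply: (subsetP sAZ).
  by rewrite groupV inE kA.
have sKA : A :&: X \subset A by apply: subsetIl.
have iK : rinv (A :&: X) by move=> x; rewrite !inE => /andP[xA xX]; rewrite iA ?iX.
have := F sAZ iA sKA iK dA cA bA dbK.
by move=> sAK; apply: subset_trans sAK (subsetIr _ _).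
Qed.

Lemma UP d j : d \in Z -> U (P d j) = P (U d) j.
Proof.
move=> dZ; elim: j => [|j IH]; first by rewrite !P0 U1.
have PZ : P d j \in Z by apply: P_inG.
by rewrite !PS -IH -Urho UM // iZ.
Qed.

Lemma covU (A : {group gT}) d : A \subset Z -> rinv A -> d \in A -> cov A d ->
  cov (UG A) (U d).
Proof.
move=> sAZ iA dA cA y /(memUG sAZ)[a aA ->].
by case: (cA a aA) => j ->; exists j; rewrite UP // (subsetP sAZ).
Qed.

Definition cong (K : {set gT}) x y := x * y^-1 \in K.

Section Cong.
Variable K : {group gT}.
Lemma cong_refl x : cong K x x. Proof. by rewrite /cong mulgV group1. Qed.
Lemma cong_trans x y z : cong K x y -> cong K y z -> cong K x z.
Proof. by rewrite /cong => h1 h2; have := groupM h1 h2; rewrite mulgA mulgKV. Qed.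
Lemma cong_sym x y : cong K x y -> cong K y x.
Proof. by rewrite /cong => h; have := groupVr h; rewrite invMg invgK. Qed.
Lemma cong_eq x y : x = y -> cong K x y. Proof. by move=> ->; apply: cong_refl. Qed.
Lemma cong_mul x y x' y' : x \in Z -> y \in Z -> x' \in Z -> y' \in Z ->
  cong K x y -> cong K x' y' -> cong K (x * x') (y * y').
Proof.
rewrite /cong => xZ yZ x'Z y'Z h1 h2.
suff -> : x * x' * (y * y')^-1 = x * y^-1 * (x' * y'^-1) by apply: groupM.
rewrite invMg (cm (groupVr y'Z) (groupVr yZ)) !mulgA; congr (_ * y'^-1).
by rewrite -!mulgA (cm x'Z (groupVr yZ)).
Qed.
Lemma cong_in x y : cong K x y -> y \in K -> x \in K.
Proof. by rewrite /cong => h yK; rewrite -(mulgKV y x) groupM. Qed.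
Lemma cong_mulk x k : x \in Z -> k \in Z -> k \in K -> cong K (x * k) x.
Proof. by move=> xZ kZ kK; rewrite /cong (cm xZ kZ) mulgK. Qed.
Lemma cong_UG x y : K \subset Z -> x \in Z -> y \in Z ->
  cong K x y -> cong (UG K) (U x) (U y).
Proof. by rewrite /cong => sKZ xZ yZ h; rewrite -UV // -UM ?groupV // mem_UG. Qed.
Lemma cong1 x : cong K x 1 = (x \in K). Proof. by rewrite /cong invg1 mulg1. Qed.
Lemma cong_sub (K' : {group gT}) x y : K \subset K' -> cong K x y -> cong K' x y.
Proof. by move=> sKK' h; apply: (subsetP sKK'). Qed.
Lemma cong_X x y n : x \in Z -> y \in Z -> cong K x y -> cong K (x ^+ n) (y ^+ n).
Proof.
move=> xZ yZ h; elim: n => [|n IH]; first by rewrite !expg0 cong_refl.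
by rewrite !expgS cong_mul ?groupX.
Qed.
Lemma cong_U x y : K \subset Z -> rinv K -> x \in Z -> y \in Z ->
  cong K x y -> cong K (U x) (U y).
Proof.
rewrite /cong => sKZ iK xZ yZ h.
rewrite -UV // -UM ?groupV //.
exact: (subsetP (UG_sub sKZ iK)) _ (mem_UG sKZ h).
Qed.
End Cong.

Lemma mulgACA x y z t : x \in Z -> y \in Z -> z \in Z -> t \in Z ->
  x * y * (z * t) = x * z * (y * t).
Proof.
move=> xZ yZ zZ tZ; rewrite -!mulgA; congr (x * _).
by rewrite !mulgA (cm yZ zZ).
Qed.

Lemma mul5 x1 x2 x3 x4 x5 y1 y2 y3 y4 y5 :
  x1 \in Z -> x2 \in Z -> x3 \in Z -> x4 \in Z -> x5 \in Z ->
  y1 \in Z -> y2 \in Z -> y3 \in Z -> y4 \in Z -> y5 \in Z ->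
  x1 * x2 * x3 * x4 * x5 * (y1 * y2 * y3 * y4 * y5) =
  x1 * y1 * (x2 * y2) * (x3 * y3) * (x4 * y4) * (x5 * y5).
Proof.
move=> *.
rewrite (@mulgACA (x1 * x2 * x3 * x4) x5 (y1 * y2 * y3 * y4) y5) ?groupM //.
rewrite (@mulgACA (x1 * x2 * x3) x4 (y1 * y2 * y3) y4) ?groupM //.
rewrite (@mulgACA (x1 * x2) x3 (y1 * y2) y3) ?groupM //.
by rewrite (@mulgACA x1 x2 y1 y2).
Qed.

Section Formula.
Variables (A : {group gT}) (d : gT).
Hypotheses (sAZ : A \subset Z) (iA : rinv A) (dA : d \in A).

Definition D k := iter k U d.
Definition E a b c e f := D 0 ^+ a * D 1 ^+ b * D 2 ^+ c * D 3 ^+ e * D 4 ^+ f.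
Fixpoint UU k : {group gT} := if k is k'.+1 then UG_group (UU k') else A.

Lemma UU_props k : UU k \subset Z /\ rinv (UU k).
Proof.
elim: k => [|k [s i]] /=; first by [].
by split; [apply: UG_Z | apply: UG_inv].
Qed.
Lemma UU_Z k : UU k \subset Z. Proof. by case: (UU_props k). Qed.
Lemma UU_inv k : rinv (UU k). Proof. by case: (UU_props k). Qed.
Lemma UU_S k : UU k.+1 \subset UU k.
Proof. exact: (UG_sub (@UU_Z k) (@UU_inv k)). Qed.
Lemma UU_le k l : k <= l -> UU l \subset UU k.
Proof.
move/subnKC <-; elim: (l - k) => [|m IH]; first by rewrite addn0.
by rewrite addnS; apply: subset_trans (UU_S _) IH.
Qed.
Lemma D_UU k : D k \in UU k.
Proof. elim: k => [|k IH] //=. exact: (mem_UG (@UU_Z k) IH). Qed.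
Lemma D_A k : D k \in A.
Proof. by apply: (subsetP (UU_le (leq0n k))); apply: D_UU. Qed.
Lemma D_Z k : D k \in Z. Proof. exact: (subsetP sAZ) (@D_A k). Qed.
Lemma DX_Z k n : D k ^+ n \in Z. Proof. by rewrite groupX ?D_Z. Qed.

Lemma E_Z a b c e f : E a b c e f \in Z.
Proof. by rewrite /E !groupM ?DX_Z. Qed.

Lemma E_add a b c e f a' b' c' e' f' :
  E a b c e f * E a' b' c' e' f' = E (a + a') (b + b') (c + c') (e + e') (f + f').
Proof. by rewrite /E mul5 ?DX_Z // !expgD. Qed.

Lemma U_E a b c e : U (E a b c e 0) = E 0 a b c e.
Proof.
rewrite /E !UM ?groupM ?DX_Z // !UX ?D_Z //.
by rewrite !expg0 mulg1 mul1g.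
Qed.

Lemma E_d : E 1 0 0 0 0 = d.
Proof. by rewrite /E !expg0 !mulg1 expg1. Qed.

Definition Q j := E j 'C(j, 2) 'C(j, 3) 'C(j, 4) 0.

Lemma formula j : cong (UU 4) (P d j) (Q j).
Proof.
have s4 := @UU_Z 4; have i4 := @UU_inv 4.
have dZ : d \in Z := subsetP sAZ d dA.
have PZ i : P d i \in Z by apply: P_inG.
elim: j => [|j IH].
  by rewrite P0 /Q /E !bin0n !expg0 !mulg1 cong_refl.
rewrite PS rhoE.
have QZ i : Q i \in Z by apply: E_Z.
apply: (cong_trans (y := d * (U (Q j) * Q j))).
  have UPZ : U (P d j) * P d j \in Z by rewrite groupM ?U_Z.
  have UQZ : U (Q j) * Q j \in Z by rewrite groupM ?U_Z.
  apply: cong_mul => //; first exact: cong_refl.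
  by apply: cong_mul => //; [exact: U_Z | exact: U_Z | exact: cong_U].
have -> : d * (U (Q j) * Q j) = Q j.+1 * E 0 0 0 0 'C(j, 4).
  rewrite /Q U_E -{1}E_d !E_add !add0n !addn0.
  by rewrite !binS bin1 add1n (addnC j 'C(j, 2)) (addnC 'C(j, 2) 'C(j, 3)) (addnC 'C(j, 3) 'C(j, 4)).
apply: cong_mulk => //; first exact: E_Z.
by rewrite /E !expg0 !mul1g groupX // D_UU.
Qed.

Lemma dZ0 : d \in Z. Proof. exact: (subsetP sAZ). Qed.
Lemma DX_UU k m n : m <= k -> D k ^+ n \in UU m.
Proof. by move=> le; rewrite groupX // (subsetP (UU_le le)) ?D_UU. Qed.

Lemma E_in1 b c e f : E 0 b c e f \in UU 1.
Proof. by rewrite /E expg0 mul1g !groupM ?DX_UU. Qed.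
Lemma E_in2 c e f : E 0 0 c e f \in UU 2.
Proof. by rewrite /E !expg0 !mul1g !groupM ?DX_UU. Qed.
Lemma E_in3 e f : E 0 0 0 e f \in UU 3.
Proof. by rewrite /E !expg0 !mul1g !groupM ?DX_UU. Qed.
Lemma E_a a : E a 0 0 0 0 = d ^+ a.
Proof. by rewrite /E !expg0 !mulg1. Qed.
Lemma E_ab a b : E a b 0 0 0 = d ^+ a * D 1 ^+ b.
Proof. by rewrite /E !expg0 !mulg1. Qed.
Lemma E_abc a b c : E a b c 0 0 = d ^+ a * D 1 ^+ b * D 2 ^+ c.
Proof. by rewrite /E !expg0 !mulg1. Qed.

Lemma W1 j : cong (UU 1) (P d j) (d ^+ j).
Proof.
apply: cong_trans (cong_sub (UU_le (isT : 1 <= 4)) (formula j)) _.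
have -> : Q j = E j 0 0 0 0 * E 0 'C(j, 2) 'C(j, 3) 'C(j, 4) 0.
  by rewrite E_add !addn0 !add0n.
by rewrite E_a; apply: cong_mulk; rewrite ?E_Z ?E_in1 ?groupX ?dZ0.
Qed.

Lemma W2 j : cong (UU 2) (P d j) (d ^+ j * D 1 ^+ 'C(j, 2)).
Proof.
apply: cong_trans (cong_sub (UU_le (isT : 2 <= 4)) (formula j)) _.
have -> : Q j = E j 'C(j, 2) 0 0 0 * E 0 0 'C(j, 3) 'C(j, 4) 0.
  by rewrite E_add !addn0 !add0n.
by rewrite E_ab; apply: cong_mulk; rewrite ?E_Z ?E_in2 ?groupM ?groupX ?D_Z ?dZ0.
Qed.

Lemma W3 j : cong (UU 3) (P d j) (d ^+ j * D 1 ^+ 'C(j, 2) * D 2 ^+ 'C(j, 3)).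
Proof.
apply: cong_trans (cong_sub (UU_le (isT : 3 <= 4)) (formula j)) _.
have -> : Q j = E j 'C(j, 2) 'C(j, 3) 0 0 * E 0 0 0 'C(j, 4) 0.
  by rewrite E_add !addn0 !add0n.
by rewrite E_abc; apply: cong_mulk; rewrite ?E_Z ?E_in3 ?groupM ?groupX ?D_Z ?dZ0.
Qed.
End Formula.

Lemma exp_coprime_mem (L : {group gT}) x r p :
  0 < r -> coprime r p -> x ^+ r \in L -> x ^+ p \in L -> x \in L.
Proof.
move=> r0 co xr xp; have [a _ dv] := Bezoutl p r0.
move: dv; rewrite (eqP co) => /dvdnP[m e].
have : x ^+ (1 + a * p) \in L by rewrite e mulnC expgM groupX.
rewrite expgD expg1 mulnC expgM => h.
by rewrite -(mulgK (x ^+ p ^+ a) x); apply: groupM h _; rewrite groupV groupX.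
Qed.

Section Main.
Variable d : gT.
Hypotheses (dZ : d \in Z) (cv : cov Z d).

Let sZZ : Z \subset Z := subxx Z.
Definition V k := UU Z k.
Lemma VZ k : V k \subset Z. Proof. exact: (@UU_Z Z sZZ iZ k). Qed.
Lemma Vinv k : rinv (V k). Proof. exact: (@UU_inv Z sZZ iZ k). Qed.
Lemma Vle k l : k <= l -> V l \subset V k. Proof. exact: (@UU_le Z sZZ iZ k l). Qed.
Lemma inVZ k x : x \in V k -> x \in Z. Proof. exact: (subsetP (VZ k)). Qed.
Arguments VZ k : clear implicits.
Arguments Vinv k : clear implicits.
Lemma PZ j : P d j \in Z. Proof. exact: P_inG. Qed.

Lemma Per (K : {group gT}) n j : K \subset Z -> rinv K -> P d n \in K ->
  cong K (P d j) (P d (j %% n)).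
Proof.
move=> sKZ iK Pn.
have Pqn q : P d (q * n) \in K.
  elim: q => [|q IH]; first by rewrite mul0n P0 group1.
  by rewrite mulSn PD groupM // iter_inv.
rewrite {1}(divn_eq j n) addnC PD; apply: cong_mulk; rewrite ?PZ //.
  by apply: (subsetP sKZ); apply: iter_inv.
exact: iter_inv.
Qed.

Lemma Cnt (K : {group gT}) n : K \subset Z -> rinv K -> 0 < n -> P d n \in K ->
  #|Z| <= n * #|K|.
Proof.
move=> sKZ iK n0 Pn.
have sub : Z \subset [set P d (nat_of_ord p.1) * p.2 | p in setX [set: 'I_n] K].
  apply/subsetP => a aZ; case: (cv aZ) => j ->.
  have := Per j sKZ iK Pn; rewrite /cong => h.
  apply/imsetP; exists (Ordinal (ltn_pmod j n0), P d j * (P d (j %% n))^-1).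
    by rewrite !inE /= h.
  by rewrite /= mulgA (cm (PZ _) (PZ _)) mulgK.
apply: leq_trans (subset_leq_card sub) _.
by apply: leq_trans (leq_imset_card _ _) _; rewrite cardsX cardsT card_ord.
Qed.

Lemma mem_Jl (X Y : {set gT}) x : x \in X -> x \in X <*> Y.
Proof. exact: (subsetP (joing_subl X Y)). Qed.
Lemma mem_Jr (X Y : {set gT}) x : x \in Y -> x \in X <*> Y.
Proof. exact: (subsetP (joing_subr X Y)). Qed.

Lemma D1_Z : U d \in Z. Proof. exact: U_Z. Qed.

Lemma odd_case p : prime p -> odd p -> forall a, a \in Z ->
  exists c, exists b, [/\ c \in <[d]>, b \in Z & a = c * b ^+ p].
Proof.
move=> pr op.
pose Pw := PwG_group Z p.
have sPZ : Pw \subset Z := Pw_Z p sZZ.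
have iP : rinv Pw := Pw_inv (k:=p) sZZ iZ.
pose L := (Pw <*> V 1)%G; pose M := (Pw <*> V 2)%G.
have sLZ : L \subset Z := J_Z sPZ (VZ 1).
have sMZ : M \subset Z := J_Z sPZ (VZ 2).
have iM : rinv M := J_inv sPZ (VZ 2) iP (Vinv 2).
have sML : M \subset L.
  rewrite join_subG joing_subl /=; apply: subset_trans (Vle (isT : 1 <= 2)) _.
  exact: joing_subr.
have key : V 1 \subset Pw.
  case: (boolP (d \in L)) => dL.
    have sZP : Z \subset Pw by apply: (FJ sZZ iZ sPZ iP dZ cv); rewrite groupV.
    exact: subset_trans (VZ 1) sZP.
  have sV1M : V 1 \subset M.
    apply/subsetP => x xV; have xZ := inVZ xV; case: (cv xZ) => j ej.
    have Pp : P d p \in M.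
      apply: cong_in (cong_sub (joing_subr _ _) (W2 sZZ iZ dZ p)) _.
      apply: mem_Jl; rewrite groupM ?mem_Pw //.
      rewrite bin2odd // mulnC expgM mem_Pw // groupX //; exact: D1_Z.
    have cM := Per j sMZ iM Pp.
    have PrL : P d (j %% p) \in L.
      apply: cong_in (cong_sub sML (cong_sym cM)) _.
      by rewrite -ej mem_Jr.
    have drL : d ^+ (j %% p) \in L.
      apply: cong_in (cong_sub _ (cong_sym (W1 sZZ iZ dZ (j %% p)))) PrL.
      exact: joing_subr.
    case r0 : (j %% p == 0).
      by move: cM; rewrite (eqP r0) P0 cong1 -ej.
    have p1 : d ^+ p \in L by apply: mem_Jl; apply: mem_Pw.
    have r0' : 0 < j %% p by rewrite lt0n r0.
    have co : coprime (j %% p) p.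
      rewrite coprime_sym prime_coprime //; apply/negP => /dvdn_leq => /(_ r0').
      by rewrite leqNgt ltn_pmod ?prime_gt0.
    by case/negP: dL; apply: (exp_coprime_mem r0' co drL p1).
  have sV1Z := VZ 1; have iV1 := Vinv 1.
  have Ud1 : U d \in V 1 by apply: mem_UG.
  have cv1 : cov (V 1) (U d) := covU sZZ iZ dZ cv.
  apply: (FJ sV1Z iV1 sPZ iP Ud1 cv1).
  by rewrite groupV; apply: (subsetP sV1M).
move=> a aZ; case: (cv aZ) => j ->.
have := W1 sZZ iZ dZ j; rewrite /cong => h.
have [b bZ eb] := memPw sZZ (subsetP key _ h).
exists (d ^+ j), b; split; rewrite ?mem_cycle //.
by rewrite -eb (cm (groupX _ dZ)) ?groupM ?groupV ?groupX ?PZ // mulgKV.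
Qed.

Lemma mul3 x1 x2 x3 y1 y2 y3 :
  x1 \in Z -> x2 \in Z -> x3 \in Z -> y1 \in Z -> y2 \in Z -> y3 \in Z ->
  x1 * x2 * x3 * (y1 * y2 * y3) = x1 * y1 * (x2 * y2) * (x3 * y3).
Proof.
move=> *; rewrite (@mulgACA (x1 * x2) x3 (y1 * y2) y3) ?groupM //.
by rewrite (@mulgACA x1 x2 y1 y2).
Qed.

Lemma two_fin : V 2 \subset PwG Z 2 -> #|Z| <= 2 * #|<[d]> <*> PwG Z 4|.
Proof.
move=> s2.
pose P4 := PwG_group Z 4.
have sP4Z : P4 \subset Z := Pw_Z 4 sZZ.
have iP4 : rinv P4 := Pw_inv (k:=4) sZZ iZ.
have pw4 x m : x \in Z -> x ^+ (4 * m) \in P4.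
  by move=> xZ; rewrite mulnC expgM mem_Pw // groupX.
have pw2 x m : x \in PwG Z 2 -> x ^+ (2 * m) \in P4.
  by case/(memPw sZZ) => e eZ ->; rewrite -expgM mulnA; apply: pw4.
have D1Z : U d \in Z := D1_Z.
have sV4 : V 4 \subset P4.
  apply/subsetP => x /(memUG (VZ 3)) [y /(memUG (VZ 2)) [z zV2 ->] ->].
  have [e eZ ez] := memPw sZZ (subsetP s2 _ zV2).
  have UeV1 : U e \in V 1 by apply: mem_UG.
  have UUeV2 : U (U e) \in V 2 by apply: (mem_UG (VZ 1)).
  by rewrite ez UX // UX ?U_Z //; have := pw2 _ 1%N (subsetP s2 _ UUeV2); rewrite muln1.
have P8 : P d 8 \in P4.
  apply: cong_in (cong_sub sV4 (formula sZZ iZ dZ 8)) _.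
  have D2P : D d 2 \in PwG Z 2 by apply: (subsetP s2); apply: (D_UU sZZ iZ dZ 2).
  have D3P : D d 3 \in PwG Z 2.
    apply: (subsetP s2); apply: (subsetP (Vle (isT : 2 <= 3))).
    exact: (D_UU sZZ iZ dZ 3).
  rewrite /Q /E (_ : 'C(8, 2) = 4 * 7)%N // (_ : 'C(8, 3) = 2 * 28)%N //.
  rewrite (_ : 'C(8, 4) = 2 * 35)%N // (_ : 8 = 4 * 2)%N //.
  apply: groupM; first apply: groupM; first apply: groupM; first apply: groupM.
  - exact: (pw4 _ 2 dZ).
  - exact: (pw4 _ 7 D1Z).
  - exact: (pw2 _ 28 D2P).
  - exact: (pw2 _ 35 D3P).
  by rewrite expg0 group1.
have cnt := Cnt sP4Z iP4 (isT : 0 < 8) P8.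
pose Y := (<[d]> <*> P4)%G.
have sYZ : Y \subset Z by rewrite join_subG cycle_subG dZ sP4Z.
have sP4Y : P4 \subset Y := joing_subr _ _.
have dY : d \in Y by apply: mem_Jl; apply: cycle_id.
have sCY : <[d]> \subset Y := joing_subl _ _.
case: (boolP (d ^+ 2 \in P4)) => d2; last first.
  have nP4 : Z \subset 'N(P4).
    exact: subset_trans (sub_abelian_cent cZ sP4Z) (cent_sub _).
  have dN : d \in 'N(P4) := subsetP nP4 _ dZ.
  pose x := coset P4 d.
  have xY : x \in Y / P4 := mem_quotient P4 dY.
  have x4 : x ^+ 4 = 1.
    by rewrite -morphX //= coset_id //; have := pw4 _ 1%N dZ; rewrite muln1.
  have x2 : x ^+ 2 != 1.
    apply/eqP => h; case/negP: d2; apply: coset_idr; first exact: groupX.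
    by rewrite morphX.
  have ox : #[x] = 4.
    have h4 : #[x] %| 4 by rewrite order_dvdn x4.
    have h2 : ~~ (#[x] %| 2) by rewrite order_dvdn.
    have := dvdn_leq (isT : 0 < 4) h4; have := order_gt0 x.
    by move: h4 h2; case: #[x] => [|[|[|[|[|n]]]]].
  have h : 4 %| #|Y : P4|.
    by rewrite -card_quotient ?(subset_trans sYZ nP4) // -ox order_dvdG.
  have i0 : 0 < #|Y : P4| by apply: indexg_gt0.
  have le : 4 * #|P4| <= #|Y|.
    by rewrite -(Lagrange sP4Y) mulnC leq_pmul2l ?cardG_gt0 // dvdn_leq.
  by apply: leq_trans cnt _; rewrite (_ : 8 = 2 * 4)%N // -mulnA leq_pmul2l.
have D1sq : (U d) ^+ 2 \in P4.
  have [t tZ et] := memPw sZZ d2.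
  by rewrite -UX // et UX // mem_Pw // U_Z.
have R a : a \in Z -> exists j m e, e \in Z /\ a = d ^+ j * (U d) ^+ m * e ^+ 2.
  move=> aZ; case: (cv aZ) => j ->.
  have h := W2 sZZ iZ dZ j.
  have [e eZ ee] := memPw sZZ (subsetP s2 _ h).
  exists j, 'C(j, 2), e; split => //.
  have XZ : d ^+ j * D d 1 ^+ 'C(j, 2) \in Z by rewrite groupM ?groupX.
  rewrite -ee (cm XZ (groupM (PZ j) (groupVr XZ))) mulgKV //.
have sub : Z \subset Y :|: (U d *: Y).
  apply/subsetP => a aZ.
  have [j [m [e [eZ ea]]]] := R a aZ.
  have [i [l [f [fZ ef]]]] := R e eZ.
  have c1 : commute (d ^+ i * U d ^+ l) (f ^+ 2).
    by apply: cm; rewrite ?groupM ?groupX.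
  have c2 : commute (d ^+ i) (U d ^+ l) by apply: cm; rewrite groupX.
  have e2 : e ^+ 2 = (d ^+ i) ^+ 2 * ((U d) ^+ l) ^+ 2 * (f ^+ 2) ^+ 2.
    by rewrite ef expgMn // expgMn.
  have ea' : a = (d ^+ j * (d ^+ i) ^+ 2) * ((U d) ^+ m * ((U d) ^+ l) ^+ 2) * (f ^+ 2) ^+ 2.
    by rewrite ea e2 -(mulg1 (d ^+ j * U d ^+ m)) mul3 ?groupX ?group1 // mul1g.
  rewrite -!expgM -!expgD in ea'.
  set n := (m + l * 2)%N in ea'.
  have cY : d ^+ (j + i * 2) \in Y by apply: (subsetP sCY); apply: mem_cycle.
  have fY : f ^+ (2 * 2) \in Y by apply: (subsetP sP4Y); apply: (pw4 _ 1%N fZ).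
  have wY : (U d ^+ 2) ^+ (n %/ 2) \in Y by apply: (subsetP sP4Y); rewrite groupX.
  have eD : U d ^+ n = U d ^+ (n %% 2) * (U d ^+ 2) ^+ (n %/ 2).
    by rewrite -expgM -expgD addnC mulnC -divn_eq.
  rewrite ea' eD inE; have := leq_trans (ltn_pmod n (isT : 0 < 2)) (leqnn 2).
  case: (n %% 2) => [|[|k]] // _.
    by apply/orP; left; rewrite expg0 mul1g; apply: groupM => //; apply: groupM.
  apply/orP; right; rewrite mem_lcoset expg1.
  rewrite (mulgA (d ^+ _)) (cm (groupX _ dZ) D1Z) -!mulgA mulKg.
  by apply: groupM => //; apply: groupM.
apply: leq_trans (subset_leq_card sub) _.
apply: leq_trans (leq_card_setU _ _).1 _.
by rewrite card_lcoset mul2n addnn.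
Qed.

Lemma two_case : #|Z| <= 2 * #|<[d]> <*> PwG Z 4|.
Proof.
apply: two_fin.
pose P2 := PwG_group Z 2.
have sPZ : P2 \subset Z := Pw_Z 2 sZZ.
have iP : rinv P2 := Pw_inv (k:=2) sZZ iZ.
have pw2 x m : x \in Z -> x ^+ (m * 2) \in P2.
  by move=> xZ; rewrite expgM mem_Pw // groupX.
pose L := (P2 <*> V 1)%G; pose M2 := (P2 <*> V 2)%G; pose M3 := (P2 <*> V 3)%G.
have V1P : V 1 \subset P2 -> V 2 \subset P2.
  by move=> h; apply: subset_trans (Vle (isT : 1 <= 2)) h.
have D1Z : U d \in Z := D1_Z.
case: (boolP (d \in L)) => dL.
  apply: V1P; apply: subset_trans (VZ 1) _.
  by apply: (FJ sZZ iZ sPZ iP dZ cv); rewrite groupV.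
have Ud1 : U d \in V 1 by apply: mem_UG.
have cv1 : cov (V 1) (U d) := covU sZZ iZ dZ cv.
case: (boolP (U d \in M2)) => D1M.
  by apply: V1P; apply: (FJ (VZ 1) (Vinv 1) sPZ iP Ud1 cv1); rewrite groupV.
have sM3Z : M3 \subset Z := J_Z sPZ (VZ 3).
have iM3 : rinv M3 := J_inv sPZ (VZ 3) iP (Vinv 3).
have sM3M2 : M3 \subset M2.
  rewrite join_subG joing_subl /=; apply: subset_trans (Vle (isT : 2 <= 3)) _.
  exact: joing_subr.
have sM2L : M2 \subset L.
  rewrite join_subG joing_subl /=; apply: subset_trans (Vle (isT : 1 <= 2)) _.
  exact: joing_subr.
have sV2M3 : V 2 \subset M3.
  apply/subsetP => x xV; have xZ := inVZ xV; case: (cv xZ) => j ej.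
  have P4M : P d 4 \in M3.
    apply: cong_in (cong_sub (joing_subr _ _) (W3 sZZ iZ dZ 4)) _.
    apply: mem_Jl.
    rewrite (_ : 'C(4, 2) = 3 * 2)%N // (_ : 'C(4, 3) = 2 * 2)%N // (_ : 4 = 2 * 2)%N //.
    apply: groupM; first apply: groupM.
    - exact: pw2.
    - exact: pw2.
    - by apply: pw2; rewrite (D_Z sZZ iZ dZ 2).
  have cM := Per j sM3Z iM3 P4M.
  have PrM2 : P d (j %% 4) \in M2.
    apply: cong_in (cong_sub sM3M2 (cong_sym cM)) _.
    by rewrite -ej; apply: mem_Jr.
  have hr := cong_in (cong_sub (joing_subr P2 (V 2)) (cong_sym (W2 sZZ iZ dZ (j %% 4)))) PrM2.
  move: cM hr; have : j %% 4 < 4 := ltn_pmod j (isT : 0 < 4).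
  case: (j %% 4) => [|[|[|[|r]]]] // _.
  - by rewrite P0 cong1 -ej.
  - move=> _ h; case/negP: dL; apply: (subsetP sM2L).
    by move: h; rewrite (_ : 'C(1, 2) = 0)%N // expg0 mulg1 expg1.
  - move=> _ h; case/negP: D1M.
    move: h; rewrite (_ : 'C(2, 2) = 1)%N // expg1 => h.
    have d2 : d ^+ 2 \in M2 by apply: mem_Jl; apply: mem_Pw.
    by rewrite -(mulKg (d ^+ 2) (U d)) groupM ?groupV.
  - move=> _ h; case/negP: dL.
    have c : commute d (U d) by apply: cm.
    move: h; rewrite (_ : 'C(3, 2) = 3)%N // -expgMn // => h.
    have sq2 : (d * U d) ^+ 2 \in M2 by apply: mem_Jl; apply: (mem_Pw sZZ); apply: groupM.
    have h1 : d * U d \in M2.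
      by have := groupM h (groupVr sq2); rewrite (expgS _ 2) mulgK.
    rewrite -(mulgK (U d) d); apply: groupM; first exact: (subsetP sM2L).
    by rewrite groupV; apply: mem_Jr.
have UUd : U (U d) \in V 2 by apply: (mem_UG (VZ 1)).
have cv2 : cov (V 2) (U (U d)) := covU (VZ 1) (Vinv 1) Ud1 cv1.
apply: (FJ (VZ 2) (Vinv 2) sPZ iP UUd cv2).
by rewrite groupV; apply: (subsetP sV2M3).
Qed.

Lemma core_index : #|Z : <[d]>| <= 2.
Proof.
pose C := <[d]>%G; pose P4 := PwG_group Z 4; pose Y := (C <*> P4)%G.
have sCZ : C \subset Z by rewrite cycle_subG.
have sP4Z : P4 \subset Z := Pw_Z 4 sZZ.
have sYZ : Y \subset Z by rewrite join_subG sCZ sP4Z.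
have T : #|Z| <= 2 * #|Y| := two_case.
have nY : Z \subset 'N(Y).
  exact: subset_trans (sub_abelian_cent cZ sYZ) (cent_sub _).
have iY : #|Z : Y| <= 2.
  by rewrite -(@leq_pmul2r #|Y|) ?cardG_gt0 // mulnC Lagrange.
have sq a : a \in Z -> a ^+ 2 \in Y.
  move=> aZ; pose x := coset Y a.
  have xZ : x \in Z / Y := mem_quotient Y aZ.
  have n2 : #|Z : Y| %| 2.
    by move: (indexg_gt0 Z Y) iY; case: #|Z : Y| => [|[|[|]]].
  have : #[x] %| 2.
    by apply: dvdn_trans n2; rewrite -card_quotient // order_dvdG.
  rewrite order_dvdn -morphX ?(subsetP nY) // => /eqP h.
  by apply: coset_idr; rewrite ?groupX ?(subsetP nY).
have T' a : a \in Z -> exists c b, [/\ c \in C, b \in Z & a ^+ 2 = c * b ^+ 4].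
  move=> aZ; have [c [y [cC yP e]]] := memJ sCZ sP4Z (sq a aZ).
  have [b bZ eb] := memPw sZZ yP.
  by exists c, b; split; rewrite // e eb.
have inZC c : c \in C -> c \in Z := subsetP sCZ c.
have S n : 0 < n -> forall a, a \in Z ->
    exists c b, [/\ c \in C, b \in Z & a ^+ 2 = c * b ^+ (2 * n)].
  elim/ltn_ind: n => n IH n0 a aZ.
  case n1 : (n == 1)%N.
    by exists 1, a; rewrite (eqP n1) muln1 mul1g group1.
  have n1' : 1 < n by rewrite ltn_neqAle eq_sym n1.
  pose p := pdiv n.
  have pr : prime p := pdiv_prime n1'.
  have en : (n %/ p * p)%N = n := divnK (pdiv_dvd n).
  set m := n %/ p in en.
  have m0 : 0 < m by move: n0; rewrite -en muln_gt0 => /andP[].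
  have mn : m < n by apply: ltn_Pdiv; rewrite ?prime_gt1.
  have [c [b [cC bZ eb]]] := IH m mn m0 a aZ.
  case: (even_prime pr) => [p2 | op].
    have [c' [b' [c'C b'Z eb']]] := T' b bZ.
    exists (c * c' ^+ m), b'; split; rewrite ?groupM ?groupX //.
    rewrite eb expgM eb' expgMn; last by apply: cm; [exact: inZC | exact: groupX].
    rewrite -!expgM mulgA; congr (_ * _ ^+ _).
    by rewrite -en p2 mulnCA mulnC.
  have [c' [b' [c'C b'Z eb']]] := odd_case pr op bZ.
  exists (c * c' ^+ (2 * m)), b'; split; rewrite ?groupM ?groupX //.
  rewrite eb eb' expgMn; last by apply: cm; [exact: inZC | exact: groupX].
  rewrite -!expgM mulgA; congr (_ * _ ^+ _).
  by rewrite -en mulnCA (mulnC p m).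
have a2C a : a \in Z -> a ^+ 2 \in C.
  move=> aZ; have [c [b [cC bZ e]]] := S _ (cardG_gt0 Z) a aZ.
  by rewrite e mulnC expgM expg_cardG // expg1n mulg1.
have sYC : Y \subset C.
  rewrite join_subG subxx /=; apply/subsetP => y /(memPw sZZ)[b bZ ->].
  by rewrite (_ : 4 = 2 * 2)%N // expgM a2C // groupX.
have : #|Z| <= 2 * #|C|.
  by apply: leq_trans T _; rewrite leq_pmul2l // subset_leq_card.
by rewrite -(Lagrange sCZ) mulnC leq_pmul2r ?cardG_gt0.
Qed.

End Main.

End Core.

End Helpers.

Theorem lemma3p15 (gT : finGroupType) (G A H : {group gT}) (s : {perm gT}) :
  A <| G -> abelian A -> cyclic (G / A) ->
  s \in Aut G -> #[s] = 2 -> s @: A = A ->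
  H \subset G -> H :&: A = 1 -> G :=: (s @: H) * H ->
  exists2 C : {group gT}, (C \subset A) && cyclic C & #|A : C| <= 2.
Proof.
move=> nAG cA cGA AutGs _ sA sHG tHA eG.
have nA : G \subset 'N(A) := normal_norm nAG.
have sAG : A \subset G := normal_sub nAG.
have nHA : H \subset 'N(A) := subset_trans sHG nA.
have isoH : H \isog H / A by apply: quotient_isog; rewrite // setIC tHA.
have cH : cyclic H by rewrite (isog_cyclic isoH); apply: cyclicS (quotientS A sHG) cGA.
have [h eH] := cyclicP cH.
have hH : h \in H by rewrite eH cycle_id.
have hG : h \in G := subsetP sHG h hH.
pose f := autm AutGs.
have injf : 'injm f := injm_autm AutGs.
have eW : s @: H = f @* H by rewrite morphimEsub // autmE.
have eWc : s @: H = <[s h]> by rewrite eW eH morphim_cycle // autmE.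
have eA : f @* A = A by rewrite morphimEsub // autmE.
pose W := (f @* H)%G.
have sWG : W \subset G by rewrite -(im_autm AutGs) morphimS.
have nWA : W \subset 'N(A) := subset_trans sWG nA.
have tWA : W :&: A = 1.
  by have := morphim1 f; rewrite -tHA injmI // eA.
have isoW : W \isog W / A by apply: quotient_isog; rewrite // setIC tWA.
have cardW : #|W| = #|H| by rewrite card_injm.
have eQ : W / A = H / A.
  apply/eqP; rewrite (eq_subG_cyclic cGA) ?quotientS //.
  by rewrite -(card_isog isoW) -(card_isog isoH) cardW.
have shW : s h \in W by rewrite /W /= -eW eWc cycle_id.
have shN : s h \in 'N(A) := subsetP nWA _ shW.
have : coset A (s h) \in H / A by rewrite -eQ mem_quotient.
case/morphimP => y yN yH ey.
have /rcosetP[a aA esh] : s h \in A :* y by apply/rcoset_kercosetP.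
pose u := y; pose d := a.
have uN : u^-1 \in 'N(A) by rewrite groupV.
have iA : Helpers.rinv u A by move=> x xA; rewrite Helpers.rhoEd memJ_norm.
have cv : Helpers.cov u A d.
  move=> x xA.
  have : x \in (s @: H) * H by rewrite -eG (subsetP sAG).
  case/mulsgP => z h' zW h'H ex.
  move: zW; rewrite eWc => /cycleP[j ez].
  exists j.
  have PA : Helpers.P u d j \in A by apply: Helpers.P_inG.
  have e1 : x = Helpers.P u d j * (u ^+ j * h') by rewrite ex ez Helpers.PEd esh !mulgA mulgKV.
  have uA : u ^+ j * h' \in A.
    by rewrite -(mulKg (Helpers.P u d j) (u ^+ j * h')) -e1 groupM ?groupV.
  have uH : u ^+ j * h' \in H by rewrite groupM ?groupX.
  have : u ^+ j * h' \in H :&: A by rewrite inE uH uA.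
  by rewrite tHA inE => /eqP e2; rewrite e1 e2 mulg1.
have := Helpers.core_index cA iA aA cv.
by exists <[d]>%G => //; rewrite cycle_subG aA cycle_cyclic.
Qed.
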